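(* Let $A$ be an infinite Boolean algebra and $K$ an infinite compact Hausdorff space. Then $irr(A)\leq nbiort_2(K_A)$ and $nbiort_2(K)\leq s(K^2)$.
   Context: $K_A$ is the Stone space of $A$ (ultrafilters of $A$ with topology generated by $[a]=\{u:a\in u\}$). $irr(A)$ is the supremum of cardinalities of sets $R\subseteq A$ such that no $r\in R$ belongs to the Boolean subalgebra generated by $R\setminus\{r\}$. A nice biorthogonal system in $C(K)$ is a family $(f_\alpha,\delta_{x_\alpha}-\delta_{y_\alpha})_{\alpha<\kappa}$ with $f_\alpha\in C(K)$, $x_\alpha,y_\alpha\in K$, $f_\alpha(x_\alpha)-f_\alpha(y_\alpha)=1$ and $f_\alpha(x_\beta)-f_\alpha(y_\beta)=0$ for $\alpha\ne\beta$; $nbiort_2(K)$ is the supremum of $\kappa$ over nice biorthogonal systems in $C(K)$. $s(Z)$ is the supremum of cardinalities of discrete subspaces of $Z$; $K^2$ has the product topology. *)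

(* Defs.v *)
From Stdlib Require Import Reals List.
Open Scope R_scope.

Record BoolAlg := {
  ba_car :> Type;
  ba_join : ba_car -> ba_car -> ba_car;
  ba_meet : ba_car -> ba_car -> ba_car;
  ba_compl : ba_car -> ba_car;
  ba_zero : ba_car;
  ba_one : ba_car;
  ba_join_assoc : forall a b c, ba_join a (ba_join b c) = ba_join (ba_join a b) c;
  ba_meet_assoc : forall a b c, ba_meet a (ba_meet b c) = ba_meet (ba_meet a b) c;
  ba_join_comm : forall a b, ba_join a b = ba_join b a;
  ba_meet_comm : forall a b, ba_meet a b = ba_meet b a;
  ba_absorb1 : forall a b, ba_join a (ba_meet a b) = a;
  ba_absorb2 : forall a b, ba_meet a (ba_join a b) = a;
  ba_distr : forall a b c, ba_meet a (ba_join b c) = ba_join (ba_meet a b) (ba_meet a c);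
  ba_join0 : forall a, ba_join a ba_zero = a;
  ba_meet1 : forall a, ba_meet a ba_one = a;
  ba_complJ : forall a, ba_join a (ba_compl a) = ba_one;
  ba_complM : forall a, ba_meet a (ba_compl a) = ba_zero
}.

Inductive gen_sub (A : BoolAlg) (S : A -> Prop) : A -> Prop :=
  | gen_in : forall a, S a -> gen_sub A S a
  | gen_zero : gen_sub A S (ba_zero A)
  | gen_one : gen_sub A S (ba_one A)
  | gen_join : forall a b, gen_sub A S a -> gen_sub A S b -> gen_sub A S (ba_join A a b)
  | gen_meet : forall a b, gen_sub A S a -> gen_sub A S b -> gen_sub A S (ba_meet A a b)
  | gen_compl : forall a, gen_sub A S a -> gen_sub A S (ba_compl A a).

Definition irredundant (A : BoolAlg) (R : A -> Prop) : Prop :=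
  forall r, R r -> ~ gen_sub A (fun a => R a /\ a <> r) r.

Definition ba_le (A : BoolAlg) (a b : A) : Prop := ba_meet A a b = a.

Definition ultrafilter (A : BoolAlg) (u : A -> Prop) : Prop :=
  u (ba_one A) /\ ~ u (ba_zero A) /\
  (forall a b, u a -> ba_le A a b -> u b) /\
  (forall a b, u a -> u b -> u (ba_meet A a b)) /\
  (forall a, u a \/ u (ba_compl A a)).

Definition Stone (A : BoolAlg) : Type := { u : A -> Prop | ultrafilter A u }.

(* Open sets of K_A: unions of basic clopens [a] = {u | a in u}. *)
Definition stone_open (A : BoolAlg) (O : Stone A -> Prop) : Prop :=
  forall u, O u -> exists a, proj1_sig u a /\
    forall v : Stone A, proj1_sig v a -> O v.

Section Top.
Context {T : Type} (is_open : (T -> Prop) -> Prop).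

Definition is_topology : Prop :=
  is_open (fun _ => True) /\
  (forall F : (T -> Prop) -> Prop, (forall U, F U -> is_open U) ->
      is_open (fun x => exists U, F U /\ U x)) /\
  (forall U V, is_open U -> is_open V -> is_open (fun x => U x /\ V x)).

Definition top_compact : Prop :=
  forall F : (T -> Prop) -> Prop,
    (forall U, F U -> is_open U) -> (forall x, exists U, F U /\ U x) ->
    exists l : list (T -> Prop), Forall F l /\ forall x, exists U, In U l /\ U x.

Definition top_hausdorff : Prop :=
  forall x y : T, x <> y -> exists U V, is_open U /\ is_open V /\ U x /\ V y /\
    forall z, ~ (U z /\ V z).

Definition top_continuous (f : T -> R) : Prop :=
  forall x eps, 0 < eps -> exists U, is_open U /\ U x /\
    forall y, U y -> Rabs (f y - f x) < eps.

(* A nice biorthogonal system (f_i, delta_{x_i} - delta_{y_i}) indexed by I. *)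
Definition nice_biorth (I : Type) (f : I -> T -> R) (x y : I -> T) : Prop :=
  (forall i, top_continuous (f i)) /\
  (forall i, f i (x i) - f i (y i) = 1) /\
  (forall i j, i <> j -> f i (x j) - f i (y j) = 0).

Definition nbiort2_size (I : Type) : Prop :=
  exists f x y, nice_biorth I f x y.

Definition discrete_sq (D : T * T -> Prop) : Prop :=
  forall p, D p -> exists U V, is_open U /\ is_open V /\ U (fst p) /\ V (snd p) /\
    forall q, D q -> U (fst q) -> V (snd q) -> q = p.

Definition s_sq_size (I : Type) : Prop :=
  exists e : I -> T * T, (forall i j, e i = e j -> i = j) /\
    discrete_sq (fun p => exists i, e i = p).
End Top.

Definition irr_size (A : BoolAlg) (I : Type) : Prop :=
  exists e : I -> A, (forall i j, e i = e j -> i = j) /\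
    irredundant A (fun a => exists i, e i = a).

Definition card_le (X Y : Type) : Prop :=
  exists g : X -> Y, forall a b, g a = g b -> a = b.
Definition card_lt (X Y : Type) : Prop := card_le X Y /\ ~ card_le Y X.

(* sup{|X| : P X} <= sup{|Y| : Q Y}, i.e. every |X| with P X is
   <= sup{|Y| : Q Y}, i.e. every cardinal below such |X| is below some such |Y|. *)
Definition sup_le (P Q : Type -> Prop) : Prop :=
  forall X, P X -> forall Z : Type, card_lt Z X -> exists Y, Q Y /\ card_lt Z Y.

Definition infinite_type (T : Type) : Prop :=
  ~ exists l : list T, forall x, In x l.

(* Main.v *)
Require Import Defs.
From Stdlib Require Import Reals List.

Module ZornM.
From mathcomp Require Import all_boot boolp classical_sets.
Local Open Scope classical_set_scope.
Lemma my_zorn (T:Type) (P : (T->Prop)->Prop) :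
  (forall F : (T->Prop)->Prop, (forall X, F X -> P X) ->
     (forall X Y, F X -> F Y -> (forall t, X t -> Y t) \/ (forall t, Y t -> X t)) ->
     P (fun t => exists X, F X /\ X t)) ->
  exists A, P A /\ forall B, (forall t, A t -> B t) -> ~ (forall t, B t -> A t) -> ~ P B.
Proof.
move=> H.
have [|A [PA Amax]] := @Zorn_bigcup T P.
  move=> F FP Ftot.
  have -> : \bigcup_(X in F) X = (fun t => exists X, F X /\ X t).
    by apply/funext => t; apply/propext; split; [case=> X FX Xt; exists X|case=> X [FX Xt]; exists X].
  apply: H => // X Y FX FY; exact: Ftot.
exists A; split => // B AB nBA; apply: Amax; split => //.
Qed.
End ZornM.

From Stdlib Require Import Classical ClassicalEpsilon Lra.

Section BA.
Variable A : BoolAlg.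
Local Notation "a * b" := (ba_meet A a b).
Local Notation "a + b" := (ba_join A a b).
Local Notation "a ^c" := (ba_compl A a) (at level 2).
Local Notation "0" := (ba_zero A).
Local Notation "1" := (ba_one A).

Lemma m_idem a : a * a = a.
Proof. rewrite <- (ba_absorb1 A a a) at 2. apply ba_absorb2. Qed.
Lemma m_0 a : a * 0 = 0.
Proof. rewrite <- (ba_complM A a), ba_meet_assoc, m_idem. reflexivity. Qed.
Lemma m_1l a : 1 * a = a.
Proof. rewrite ba_meet_comm; apply ba_meet1. Qed.
Lemma m_0l a : 0 * a = 0.
Proof. rewrite ba_meet_comm; apply m_0. Qed.
Lemma j_0l a : 0 + a = a.
Proof. rewrite ba_join_comm; apply ba_join0. Qed.
Lemma distr_r a b c : (b + c) * a = b * a + c * a.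
Proof. rewrite ba_meet_comm, ba_distr, (ba_meet_comm A a b), (ba_meet_comm A a c). reflexivity. Qed.
Lemma j_1 a : a + 1 = 1.
Proof. transitivity (1 * (1 + a)). rewrite m_1l, ba_join_comm; reflexivity. apply ba_absorb2. Qed.
Lemma dual_distr a b c : a + b * c = (a + b) * (a + c).
Proof.
  rewrite ba_distr, (ba_meet_comm A (a + b) a), ba_absorb2, distr_r.
  rewrite ba_join_assoc, ba_absorb1. reflexivity.
Qed.
Lemma compl_uniq a b : a * b = 0 -> a + b = 1 -> b = a^c.
Proof.
  intros H1 H2.
  transitivity (b * a^c).
  - rewrite <- (ba_meet1 A b) at 1. rewrite <- (ba_complJ A a), ba_distr,
      ba_meet_comm, H1, j_0l. reflexivity.
  - rewrite <- (ba_meet1 A (a^c)) at 2. rewrite <- H2, ba_distr,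
      (ba_meet_comm A (a^c) a), ba_complM, j_0l, ba_meet_comm. reflexivity.
Qed.
Lemma de_morgan b c : (b + c)^c = b^c * c^c.
Proof.
  symmetry. apply compl_uniq.
  - rewrite distr_r, ba_meet_assoc, ba_complM, m_0l.
    rewrite (ba_meet_comm A (b^c) (c^c)), ba_meet_assoc, ba_complM, m_0l, ba_join0.
    reflexivity.
  - rewrite dual_distr. rewrite (ba_join_comm A b c) at 1.
    rewrite <- (ba_join_assoc A c b), ba_complJ, j_1.
    rewrite <- (ba_join_assoc A b c), ba_complJ, j_1, ba_meet1. reflexivity.
Qed.
Lemma mm_l a b : (a * b) * a = a * b.
Proof. rewrite <- ba_meet_assoc, (ba_meet_comm A b a), ba_meet_assoc, m_idem. reflexivity. Qed.
Lemma absorb_step p m c : p * m = p -> (p * c) * (c * m) = p * c.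
Proof.
  intro H. rewrite <- ba_meet_assoc, (ba_meet_assoc A c c m), m_idem,
    (ba_meet_comm A c m), ba_meet_assoc, H. reflexivity.
Qed.
Lemma absorb_step2 p m c : p * m = p -> p * c = p -> p * (c * m) = p.
Proof. intros H1 H2. rewrite ba_meet_assoc, H2, H1. reflexivity. Qed.

Lemma ult_not u a : ultrafilter A u -> u a -> u (a^c) -> False.
Proof.
  intros [H1 [H2 [H3 [H4 H5]]]] Ha Hb. apply H2. rewrite <- (ba_complM A a). auto.
Qed.

Definition meetl (l : list A) := fold_right (ba_meet A) 1 l.
Definition FIP (S : A -> Prop) := forall l, Forall S l -> meetl l <> 0.

Lemma meetl_app l1 l2 : meetl (l1 ++ l2) = meetl l1 * meetl l2.
Proof.
  induction l1; simpl. rewrite m_1l; reflexivity.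
  rewrite IHl1, ba_meet_assoc. reflexivity.
Qed.

Lemma ext_ultra (S : A -> Prop) : FIP S -> exists u, ultrafilter A u /\ forall a, S a -> u a.
Proof.
  intro HS.
  destruct (ZornM.my_zorn A (fun X => FIP (fun a => S a \/ X a))) as [A0 [PA0 Amax]].
  { intros F FP Ftot l Hl.
    assert (Forall S l \/ exists X, F X /\ Forall (fun a => S a \/ X a) l) as [H|[X [FX H]]].
    { induction l as [|a l IH]. left; constructor.
      inversion Hl as [|? ? Ha Hl']; subst.
      destruct (IH Hl') as [H|[X1 [FX1 H]]].
      - destruct Ha as [Ha|[X0 [FX0 Ha]]]. left; constructor; auto.
        right; exists X0; split; auto. constructor. auto.
        eapply Forall_impl; [|exact H]. simpl; auto.
      - destruct Ha as [Ha|[X0 [FX0 Ha]]].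
        right; exists X1; split; auto.
        destruct (Ftot X0 X1 FX0 FX1) as [Hs|Hs].
        + right; exists X1; split; auto.
        + right; exists X0; split; auto. constructor; auto.
          eapply Forall_impl; [|exact H]. simpl. intros b [?|?]; auto. }
    - apply HS; auto.
    - apply (FP X FX l H). }
  set (M := fun a => S a \/ A0 a).
  assert (Hmax : forall a, FIP (fun t => M t \/ t = a) -> M a).
  { intros a Ha. destruct (classic (A0 a)) as [H|H]. right; auto.
    exfalso. apply (Amax (fun t => A0 t \/ t = a)).
    - intros t Ht; left; exact Ht.
    - intro Hs. apply H, Hs; right; reflexivity.
    - intros l Hl. apply Ha. eapply Forall_impl; [|exact Hl]. unfold M; simpl. tauto. }
  assert (Hadd : forall a, (forall l, Forall M l -> meetl l * a <> 0) -> M a).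
  { intros a Ha. apply Hmax. intros l Hl.
    assert (exists l', Forall M l' /\ meetl l * a = meetl l' * a) as [l' [Hl' Heq]].
    { induction l as [|x l IH]. exists nil; split; auto.
      inversion Hl as [|? ? Hx Hl0]; subst.
      destruct (IH Hl0) as [l' [Hl' Heq]].
      destruct Hx as [Hx|Hx].
      - exists (x :: l'); split. constructor; auto.
        simpl. rewrite <- !ba_meet_assoc, Heq. reflexivity.
      - subst x. exists l'; split; auto. simpl.
        rewrite <- Heq, (ba_meet_comm A a (meetl l)), <- ba_meet_assoc, m_idem.
        reflexivity. }
    intro H0. apply (Ha l' Hl'). rewrite <- Heq, H0, m_0l. reflexivity. }
  assert (Hnot : forall a, ~ M a -> exists l, Forall M l /\ meetl l * a = 0).
  { intros a Ha. apply NNPP. intro H. apply Ha, Hadd. intros l Hl H0. apply H. eauto. }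
  exists M. split; [|unfold M; auto].
  repeat split.
  - apply Hadd. intros l Hl. rewrite ba_meet1. apply PA0; auto.
  - intro H. apply (PA0 (0 :: nil)). constructor; auto. simpl. apply ba_meet1.
  - intros a b Ha Hab. apply Hadd. intros l Hl H0.
    apply (PA0 (a :: l)). constructor; auto. simpl.
    rewrite <- Hab, <- ba_meet_assoc, (ba_meet_comm A b), H0, m_0. reflexivity.
  - intros a b Ha Hb. apply Hadd. intros l Hl H0.
    apply (PA0 (a :: b :: l)). constructor; auto. simpl.
    rewrite ba_meet_assoc, ba_meet_comm. exact H0.
  - intro a. destruct (classic (M a)) as [H|H]; auto.
    destruct (classic (M (a^c))) as [H'|H']; auto. exfalso.
    destruct (Hnot a H) as [l1 [Hl1 E1]].
    destruct (Hnot _ H') as [l2 [Hl2 E2]].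
    apply (PA0 (l1 ++ l2)). apply Forall_app; auto.
    rewrite meetl_app, <- (ba_meet1 A (meetl l1 * meetl l2)), <- (ba_complJ A a), ba_distr.
    rewrite (ba_meet_comm A (meetl l1) (meetl l2)) at 1.
    rewrite <- ba_meet_assoc, E1, m_0, <- ba_meet_assoc, E2, m_0, ba_join0. reflexivity.
Qed.

Lemma separate (B : A -> Prop) (e : A) :
  (forall b, B b -> B (b^c)) -> (forall b c, B b -> B c -> B (b + c)) ->
  (forall b c, B b -> B c -> B (b * c)) -> B 0 -> B 1 -> ~ B e ->
  exists x y, ultrafilter A x /\ ultrafilter A y /\ x e /\ ~ y e /\
    forall b, B b -> (x b <-> y b).
Proof.
  intros Bc Bj Bm B0 B1 Be.
  set (S := fun a => a = e \/ exists b, B b /\ b * e^c = 0 /\ a = b^c).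
  assert (HS : FIP S).
  { intros l Hl.
    assert (exists b, B b /\ b * e^c = 0 /\ (e * b^c) * meetl l = e * b^c) as [b [Bb [Hb Hm]]].
    { induction l as [|a l IH].
      - exists 0; repeat split; auto. apply m_0l. apply ba_meet1.
      - inversion Hl as [|? ? Ha Hl0]; subst.
        destruct (IH Hl0) as [b [Bb [Hb Hm]]].
        destruct Ha as [Ha|[c [Bcc [Hc Ha]]]]; subst a.
        + exists b; repeat split; auto. simpl. apply absorb_step2; auto.
          apply mm_l.
        + exists (b + c); repeat split; auto.
          rewrite distr_r, Hb, Hc, ba_join0; reflexivity.
          simpl. rewrite de_morgan, (ba_meet_assoc A e (b^c) (c^c)). apply absorb_step; auto. }
    intro H0. apply Be. rewrite H0, m_0 in Hm.
    assert (E1 : e = e * b).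
    { rewrite <- (ba_meet1 A e) at 1. rewrite <- (ba_complJ A b), ba_distr, <- Hm, ba_join0. reflexivity. }
    assert (E2 : b = b * e).
    { rewrite <- (ba_meet1 A b) at 1. rewrite <- (ba_complJ A e), ba_distr, Hb, ba_join0. reflexivity. }
    rewrite E1, ba_meet_comm, <- E2. exact Bb. }
  destruct (ext_ultra S HS) as [x [Ux Sx]].
  set (T := fun a => a = e^c \/ (B a /\ x a)).
  assert (HT : FIP T).
  { intros l Hl.
    assert (exists b, B b /\ x b /\ (e^c * b) * meetl l = e^c * b) as [b [Bb [Xb Hm]]].
    { induction l as [|a l IH].
      - exists 1; repeat split; auto. apply Ux. apply ba_meet1.
      - inversion Hl as [|? ? Ha Hl0]; subst.
        destruct (IH Hl0) as [b [Bb [Xb Hm]]].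
        destruct Ha as [Ha|[Bcc Xc]]; [subst a|].
        + exists b; repeat split; auto. simpl. apply absorb_step2; auto. apply mm_l.
        + exists (b * a); repeat split; auto. apply Ux; auto.
          simpl. rewrite (ba_meet_assoc A (e^c) b a). apply absorb_step; auto. }
    intro H0. rewrite H0, m_0, ba_meet_comm in Hm.
    apply (ult_not x b Ux Xb). apply Sx. right. exists b; auto. }
  destruct (ext_ultra T HT) as [y [Uy Ty]].
  exists x, y. split; [exact Ux|]. split; [exact Uy|]. split; [|split].
  - apply Sx. left; auto.
  - intro H. apply (ult_not y e Uy H). apply Ty. left; auto.
  - intros b Bb; split.
   + intros Hb. apply Ty. right; auto.
   + intros Hb. apply NNPP. intro Hx.
    destruct Ux as [_ [_ [_ [_ U5]]]]. destruct (U5 b) as [?|Hc]; [tauto|].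
    apply (ult_not y b Uy Hb). apply Ty. right; auto.
Qed.
End BA.

Lemma part1 (A : BoolAlg) (X : Type) : irr_size A X -> @nbiort2_size (Stone A) (stone_open A) X.
Proof.
  intros [e [inj irr]].
  assert (Hsep : forall i, exists p : Stone A * Stone A,
     proj1_sig (fst p) (e i) /\ ~ proj1_sig (snd p) (e i) /\
     forall j, i <> j -> (proj1_sig (fst p) (e j) <-> proj1_sig (snd p) (e j))).
  { intro i.
    destruct (separate A (gen_sub A (fun a => (exists k, e k = a) /\ a <> e i)) (e i))
      as [x [y [Ux [Uy [Hx [Hy Hxy]]]]]].
    - intros; apply gen_compl; auto.
    - intros; apply gen_join; auto.
    - intros; apply gen_meet; auto.
    - apply gen_zero.
    - apply gen_one.
    - apply irr. exists i; reflexivity.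
    - exists (exist _ x Ux, exist _ y Uy). simpl. split; [auto|split; [auto|]].
      intros j Hij. apply Hxy. apply gen_in. split. exists j; reflexivity.
      intro E. apply Hij. symmetry. apply inj; auto. }
  set (p := fun i => proj1_sig (constructive_indefinite_description _ (Hsep i))).
  assert (Hp : forall i, proj1_sig (fst (p i)) (e i) /\ ~ proj1_sig (snd (p i)) (e i) /\
     forall j, i <> j -> (proj1_sig (fst (p i)) (e j) <-> proj1_sig (snd (p i)) (e j))).
  { intro i. unfold p. destruct (constructive_indefinite_description _ (Hsep i)); simpl; auto. }
  set (f := fun i (v : Stone A) => if excluded_middle_informative (proj1_sig v (e i)) then 1%R else 0%R).
  exists f, (fun i => fst (p i)), (fun i => snd (p i)).
  split; [|split].
  - intros i u eps Heps.
    destruct (excluded_middle_informative (proj1_sig u (e i))) as [Hu|Hu].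
    + exists (fun v : Stone A => proj1_sig v (e i)). split; [|split; auto].
      * intros w Hw. exists (e i); split; auto.
      * intros v Hv. unfold f.
        destruct (excluded_middle_informative (proj1_sig v (e i))); try tauto.
        destruct (excluded_middle_informative (proj1_sig u (e i))); try tauto.
        rewrite Rminus_diag, Rabs_R0; auto.
    + destruct u as [u Uu]. simpl in Hu.
      assert (Hc : u (ba_compl A (e i))).
      { destruct Uu as [_ [_ [_ [_ U5]]]]. destruct (U5 (e i)); tauto. }
      exists (fun v : Stone A => proj1_sig v (ba_compl A (e i))). split; [|split; auto].
      * intros w Hw. exists (ba_compl A (e i)); split; auto.
      * intros [v Uv] Hv. simpl in Hv. unfold f. simpl.
        destruct (excluded_middle_informative (v (e i))) as [Hv'|].
        { exfalso; apply (ult_not A v (e i) Uv Hv' Hv). }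
        destruct (excluded_middle_informative (u (e i))); try tauto.
        rewrite Rminus_diag, Rabs_R0; auto.
  - intro i. destruct (Hp i) as [H1 [H2 _]]. unfold f. simpl.
    destruct (excluded_middle_informative (proj1_sig (fst (p i)) (e i))); try tauto.
    destruct (excluded_middle_informative (proj1_sig (snd (p i)) (e i))); try tauto.
    lra.
  - intros i j Hij. destruct (Hp j) as [_ [_ H3]].
    assert (Hji : j <> i) by auto.
    specialize (H3 i Hji). unfold f. simpl.
    destruct (excluded_middle_informative (proj1_sig (fst (p j)) (e i)));
    destruct (excluded_middle_informative (proj1_sig (snd (p j)) (e i))); try tauto; lra.
Qed.

Lemma part2 (K : Type) (is_open : (K -> Prop) -> Prop) (X : Type) :
  nbiort2_size is_open X -> s_sq_size is_open X.
Proof.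
  intros [f [x [y [Hc [H1 H0]]]]].
  exists (fun i => (x i, y i)). split.
  - intros i j E. injection E; intros Ey Ex.
    apply NNPP; intro Hij. specialize (H0 i j Hij). rewrite <- Ex, <- Ey, H1 in H0. lra.
  - intros q [i Ei]. subst q. simpl.
    destruct (Hc i (x i) (/2) ltac:(lra)) as [U [OU [Ux HU]]].
    destruct (Hc i (y i) (/2) ltac:(lra)) as [V [OV [Vy HV]]].
    exists U, V. split; [auto|split; [auto|split; [auto|split; [auto|]]]].
    intros q [j Ej] Uq Vq. subst q. simpl in *.
    destruct (classic (i = j)) as [E|Hij]. subst; reflexivity.
    exfalso. specialize (H0 i j Hij). specialize (H1 i).
    apply HU, Rabs_def2 in Uq. apply HV, Rabs_def2 in Vq. lra.
Qed.

Theorem mainTheorem15 :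
  (forall A : BoolAlg, infinite_type A ->
     sup_le (irr_size A) (@nbiort2_size (Stone A) (stone_open A))) /\
  (forall (K : Type) (is_open : (K -> Prop) -> Prop),
     is_topology is_open -> top_compact is_open -> top_hausdorff is_open ->
     infinite_type K ->
     sup_le (nbiort2_size is_open) (s_sq_size is_open)).
Proof.
  split.
  - intros A _ X HX Z HZ. exists X. split; auto. apply part1; auto.
  - intros K is_open _ _ _ _ X HX Z HZ. exists X. split; auto. apply part2; auto.
Qed.
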